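(* For $m\in\mathbb{N}$ let \[ x_m=(-1)^{m-1}\sum_{\ell=0}^{m}(-1)^{\ell-1}S(m,\ell)(2\ell-3)!!, \] so that $(x_1,x_2,x_3,x_4,x_5,x_6,\dots)=(1,0,1,3,16,105,\dots)$. For integers $n\ge k\ge0$ let $P(n,k)=k!\,[2(n-k)-1]!!\binom{2n-k-1}{2(n-k)}$. Then for all integers $n\ge k\ge 0$, \[ B_{n,k}(x_1,x_2,\dots,x_{n-k+1})=\frac{(-1)^n}{k!}\sum_{\ell=k}^{n}(-1)^{\ell}S(n,\ell)P(\ell,k). \]
   Context: $S(n,\ell)$ are the Stirling numbers of the second kind, given by $\frac{(e^x-1)^\ell}{\ell!}=\sum_{n\ge \ell}S(n,\ell)\frac{x^n}{n!}$. The Bell polynomials of the second kind are \[ B_{n,k}(x_1,\dots,x_{n-k+1})=\sum\frac{n!}{\prod_{i}\ell_i!}\prod_{i=1}^{n-k+1}\Big(\frac{x_i}{i!}\Big)^{\ell_i}, \] where the sum is over nonnegative integers $\ell_1,\dots,\ell_{n-k+1}$ with $\sum i\ell_i=n$ and $\sum\ell_i=k$. Double factorials: $(2j-1)!!=1\cdot3\cdots(2j-1)$ for $j\ge1$, and $[-(2j+1)]!!=(-1)^j/(2j-1)!!$ for $j\ge0$, so $(-1)!!=1$ and $(-3)!!=-1$. The binomial $\binom{2n-k-1}{2(n-k)}$ equals $1$ when $n=k$. *)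

(* Defs.v *)
From mathcomp Require Import all_boot all_order all_algebra.
Set Implicit Arguments. Unset Strict Implicit. Unset Printing Implicit Defensive.
Import Order.TTheory GRing.Theory Num.Theory.
Local Open Scope ring_scope.

Fixpoint stirling2 (n k : nat) : nat :=
  match n, k with
  | 0, 0 => 1
  | 0, _.+1 => 0
  | _.+1, 0 => 0
  | n'.+1, k'.+1 => (k'.+1 * stirling2 n' k'.+1 + stirling2 n' k')%N
  end.

(* Double factorial on (odd) integers, as rationals:
   for z = m >= 0 : product of the odd numbers <= m  (so (2j-1)!! = 1*3*...*(2j-1));
   for z = -(n+1) : (-1)^(n/2) / (product of the odd numbers < n),
   i.e. [-(2j+1)]!! = (-1)^j / (2j-1)!!, giving (-1)!! = 1, (-3)!! = -1.
   Only odd arguments are ever used. *)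
Definition dfact (z : int) : rat :=
  match z with
  | Posz m => \prod_(i < m.+1 | odd i) (i%:R : rat)
  | Negz n => (-1) ^+ (n./2) / \prod_(i < n | odd i) (i%:R : rat)
  end.

(* The tuple (l_1,...,l_{n-k+1}) is represented by a finite
   function l with l j = l_{j+1}; each l_i <= n is implied by sum i l_i = n. *)
Definition bellB (n k : nat) (x : nat -> rat) : rat :=
  \sum_(l : {ffun 'I_(n - k + 1) -> 'I_n.+1} |
         ((\sum_(j < n - k + 1) (j.+1 * l j)%N)%N == n) &&
         ((\sum_(j < n - k + 1) (l j : nat))%N == k))
    ((n`!)%:R / \prod_(j < n - k + 1) ((l j)`!)%:R) *
    \prod_(j < n - k + 1) (x j.+1 / (j.+1`!)%:R) ^+ (l j).

Definition xseq (m : nat) : rat :=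
  (-1) ^ (m%:Z - 1) *
  \sum_(0 <= l < m.+1)
     (-1) ^ (l%:Z - 1) * (stirling2 m l)%:R * dfact ((2 * l)%:Z - 3).

Definition Pnk (n k : nat) : rat :=
  (k`!)%:R * dfact ((2 * (n - k))%:Z - 1) * ('C(2 * n - k - 1, 2 * (n - k)))%:R.

(* Main.v *)
Require Import Defs.
From mathcomp Require Import all_boot all_order all_algebra.
From mathcomp Require Import ring lra zify.
Import Order.TTheory GRing.Theory Num.Theory.
Local Open Scope ring_scope.

Lemma fact_inv_bin (k i : nat) : (i <= k)%N ->
  ((i`!)%:R^-1 * ((k - i)`!)%:R^-1 : rat) = (k`!)%:R^-1 * ('C(k, i))%:R.
Proof.
move=> hik; rewrite -(bin_fact hik) !natrM.
have h1 : ((i`!)%:R : rat) != 0 by rewrite pnatr_eq0 -lt0n fact_gt0.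
have h2 : (((k - i)`!)%:R : rat) != 0 by rewrite pnatr_eq0 -lt0n fact_gt0.
have h3 : (('C(k, i))%:R : rat) != 0 by rewrite pnatr_eq0 -lt0n bin_gt0.
by field; rewrite h1 h2 h3.
Qed.

Definition Epoly (n : nat) (c : {poly rat}) : {poly {poly rat}} :=
  \poly_(a < n.+1) (((a`!)%:R^-1 : rat) *: c ^+ a).

Lemma multi (n : nat) (y : nat -> {poly rat}) (M k : nat) : (k <= n)%N ->
  (\prod_(j < M) Epoly n (y j))`_k = ((k`!)%:R^-1 : rat) *: (\sum_(j < M) y j) ^+ k.
Proof.
elim: M k => [|M IH] k hk.
  rewrite !big_ord0 coefC expr0n; case: k hk => [|k] _ /=; first by rewrite scale1r.
  by rewrite scaler0.
rewrite big_ord_recr /= coefM [X in _ = _ *: X ^+ _]big_ord_recr /= addrC exprDn scaler_sumr.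
apply: eq_bigr => i _.
have hi : (i <= k)%N by rewrite -ltnS.
rewrite IH; last by apply: leq_trans hk.
rewrite /Epoly coef_poly ifT; last by rewrite ltnS (leq_trans (leq_subr _ _) hk).
rewrite -scalerAr -scalerAl scalerA mulrC fact_inv_bin // -scalerA scaler_nat.
by rewrite mulrC.
Qed.

Lemma prodZX (R : comNzRingType) (I : Type) (r : seq I) (c : I -> R) (e : I -> nat) :
  \prod_(i <- r) (c i *: 'X^(e i)) = (\prod_(i <- r) c i) *: ('X^(\sum_(i <- r) e i) : {poly R}).
Proof.
under eq_bigr => i _ do rewrite -mul_polyC.
by rewrite big_split /= -rmorph_prod prodrXr mul_polyC.
Qed.

Definition ycoef (x : nat -> rat) (j : nat) : {poly rat} :=
  (x j.+1 / (j.+1`!)%:R) *: 'X^(j.+1).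

Lemma bell_coef (x : nat -> rat) (n k : nat) : (k <= n)%N ->
  bellB n k x = (n`!)%:R *
    (((k`!)%:R^-1 : rat) *: (\sum_(j < n - k + 1) ycoef x j) ^+ k)`_n.
Proof.
move=> hk; rewrite -(@multi n) // /Epoly.
under eq_bigr => j _ do rewrite poly_def.
rewrite bigA_distr_bigA /= coef_sum coef_sum /bellB mulr_sumr [RHS](bigID
  (fun l : {ffun 'I_(n - k + 1) -> 'I_n.+1} =>
     ((\sum_(j < n - k + 1) (j.+1 * l j)%N)%N == n) &&
     ((\sum_(j < n - k + 1) (l j : nat))%N == k))) /=.
rewrite [X in _ = _ + X]big1 ?addr0.
  apply: eq_bigr => l /andP[/eqP h1 /eqP h2].
  rewrite prodZX coefZ coefXn h2 eqxx mulr1.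
  rewrite (eq_bigr (fun j : 'I_(n-k+1) => (((l j)`!)%:R^-1 * (x j.+1 / (j.+1`!)%:R) ^+ l j) *: 'X^(j.+1 * l j)));
    last by move=> j _; rewrite /ycoef exprZn -exprM scalerA.
  rewrite prodZX coefZ coefXn h1 eqxx mulr1 big_split /= prodrV; last first.
    by move=> j _; rewrite unitfE pnatr_eq0 -lt0n fact_gt0.

  by rewrite mulrA.
move=> l /negbTE hl.
rewrite prodZX coefZ coefXn.
case: eqP => h2; last by rewrite mulr0 coef0 mulr0.
rewrite mulr1.
rewrite (eq_bigr (fun j : 'I_(n-k+1) => (((l j)`!)%:R^-1 * (x j.+1 / (j.+1`!)%:R) ^+ l j) *: 'X^(j.+1 * l j)));
    last by move=> j _; rewrite /ycoef exprZn -exprM scalerA.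
rewrite prodZX coefZ coefXn.
case: eqP => h1; last by rewrite mulr0 mulr0.
by move: hl; rewrite -h1 -h2 !eqxx.
Qed.

Definition vz (m : nat) (p : {poly rat}) := forall i, (i < m)%N -> p`_i = 0.

Lemma vzW [a] b [p] : (b <= a)%N -> vz a p -> vz b p.
Proof. by move=> hba h i hi; apply: h; apply: leq_trans hba. Qed.

Lemma vzM [a b] [p q : {poly rat}] : vz a p -> vz b q -> vz (a + b) (p * q).
Proof.
move=> hp hq i hi; rewrite coefM big1 // => j _.
case: (ltnP j a) => hj; first by rewrite hp // mul0r.
rewrite hq ?mulr0 //.
have hj' : (j <= i)%N by rewrite -ltnS.
lia.
Qed.

Lemma vzX [a p] e : vz a p -> vz (a * e) (p ^+ e).
Proof.
move=> hp; elim: e => [|e IH]; first by move=> i; rewrite muln0.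
by rewrite exprS mulnS; apply: vzM.
Qed.

Lemma vz_sum (m : nat) (n : nat) (F : 'I_n -> {poly rat}) :
  (forall i, vz m (F i)) -> vz m (\sum_(i < n) F i).
Proof. by move=> h i hi; rewrite coef_sum big1 // => j _; apply: h. Qed.

Lemma vz_powdiff (M k : nat) (p q : {poly rat}) : (0 < k)%N ->
  vz 1 p -> vz 1 q -> vz (M + 1) (p - q) -> vz (M + k) (p ^+ k - q ^+ k).
Proof.
move=> hk hp hq hpq; rewrite subrXX.
have -> : (M + k = (M + 1) + (k.-1))%N by lia.
apply: vzM => //; apply: vz_sum => i.
have e : (k.-1 = 1 * (k.-1 - i) + 1 * i)%N.
  have := ltn_ord i; lia.
rewrite {1}e.
by apply: vzM; apply: vzX.
Qed.

Lemma eqcM [a] [p p' : {poly rat}] (q : {poly rat}) : vz a (p - p') -> forall i, (i < a)%N -> (p * q)`_i = (p' * q)`_i.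
Proof.
move=> h i hi; apply/eqP; rewrite -subr_eq0 -coefB -mulrBl.
apply/eqP; have h0 : vz 0 q by [].
by have := vzM h h0 i; rewrite addn0; apply.
Qed.

Definition wc (i : nat) : rat := if i is 0 then 0 else - (-1) ^+ i / (i`!)%:R.
Definition Wp (N : nat) : {poly rat} := \poly_(i < N) wc i.

Lemma Wp_deriv N : vz N.-1 ((Wp N)^`() - (1 - Wp N)).
Proof.
move=> i hi; rewrite coefB coef_deriv coefB coef1 /Wp !coef_poly.
have hi1 : (i.+1 < N)%N by lia.
rewrite hi1 (ltn_trans (ltnSn i) hi1) /=.
case: i hi hi1 => [|i] _ _ /=.
  by rewrite expr1 opprK subr0 mulr1n (_ : 1`! = 1)%N // divr1 subrr.
rewrite sub0r -mulr_natr (exprS _ i.+1) (factS i.+1) natrM.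
have h1 : ((i.+2)%:R : rat) != 0 by rewrite pnatr_eq0.
have h2 : (((i.+1)`!)%:R : rat) != 0 by rewrite pnatr_eq0 -lt0n fact_gt0.
field.
have hi0 : (0 : rat) <= i%:R := ler0n _ _.
rewrite h2 /=; apply: lt0r_neq0; lra.
Qed.

Lemma Wp_step N m l : (m.+1 < N)%N ->
  (Wp N ^+ l.+1)`_m.+1 * (m.+1)%:R =
  (l.+1)%:R * ((Wp N ^+ l)`_m - (Wp N ^+ l.+1)`_m).
Proof.
move=> hm.
have e2 : ((Wp N ^+ l.+1)^`())`_m = ((Wp N)^`() * Wp N ^+ l *+ l.+1)`_m.
  by rewrite deriv_exp.
move: e2; rewrite coef_deriv coefMn (eqcM _ (Wp_deriv N)); last by lia.
rewrite mulrBl mul1r coefB -exprS => e.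
by rewrite mulr_natr e mulr_natl.
Qed.


Lemma Wp_pow N m l : (m < N)%N ->
  (Wp N ^+ l)`_m * (m`!)%:R = (-1) ^+ (m + l) * (l`!)%:R * (stirling2 m l)%:R.
Proof.
elim: m l => [|m IH] l hm.
  rewrite -horner_coef0 horner_exp horner_coef0 /Wp coef_poly hm /= mulr1.
  case: l => [|l]; first by rewrite !expr0 mul1r.
  by rewrite expr0n /= mulr0.
case: l => [|l].
  rewrite expr0 coef1 /= mul0r.
  by case: m {IH hm} => [|m] /=; rewrite mulr0.
have e1 := Wp_step N m l hm.
have e2 := IH l (ltnW hm).
have e3 := IH l.+1 (ltnW hm).
rewrite factS natrM mulrA e1 -mulrA mulrBl e2 e3.
have -> : stirling2 m.+1 l.+1 = (l.+1 * stirling2 m l.+1 + stirling2 m l)%N by [].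
rewrite natrD natrM factS natrM !addnS !addSn !exprS.
ring.
Qed.

Lemma stirling2_gt m l : (m < l)%N -> stirling2 m l = 0%N.
Proof.
elim: m l => [|m IH] [|l] hl; [by [] | by [] | by [] |].
have h1 : (m < l.+1)%N by apply: ltnW.
have h2 : (m < l)%N by [].
have -> : stirling2 m.+1 l.+1 = (l.+1 * stirling2 m l.+1 + stirling2 m l)%N by [].
by rewrite (IH _ h1) (IH _ h2) muln0.
Qed.

Definition Q (l k : nat) : rat :=
  match k with
  | 0 => (l == 0%N)%:R
  | k'.+1 => if (k'.+1 <= l)%N then
      (k'.+1)%:R * ((k' + 2 * (l - k'.+1))`!)%:R /
      ((2 ^ (l - k'.+1))%:R * ((l - k'.+1)`!)%:R * (l`!)%:R)
    else 0
  end.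
Arguments Q : simpl never.

Lemma Qform k j : Q (k.+1 + j) k.+1 =
  (k.+1)%:R * ((k + 2 * j)`!)%:R / ((2 ^ j)%:R * (j`!)%:R * ((k.+1 + j)`!)%:R).
Proof. by rewrite /Q leq_addr addKn. Qed.

Lemma Qlt l k : (l < k)%N -> Q l k = 0.
Proof. by case: k => [|k] // h; rewrite /Q leqNgt h. Qed.

Lemma Qdiag k : Q k k = 1.
Proof.
case: k => [|k] //; have := Qform k 0; rewrite addn0 muln0 addn0 => ->.
rewrite expn0 fact0 !mul1r factS natrM.
have h2 : ((k`!)%:R : rat) != 0 by rewrite pnatr_eq0 -lt0n fact_gt0.
field.
have := ler0n rat k; rewrite h2 /= => ?; apply: lt0r_neq0; lra.
Qed.

Lemma nzfact n : ((n`!)%:R : rat) != 0.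
Proof. by rewrite pnatr_eq0 -lt0n fact_gt0. Qed.

Lemma nz1n n : (1 + n%:R : rat) != 0.
Proof. have := ler0n rat n; move=> h; apply: lt0r_neq0; lra. Qed.
Lemma nz2n n : (2 + n%:R : rat) != 0.
Proof. have := ler0n rat n; move=> h; apply: lt0r_neq0; lra. Qed.

Ltac nzs := repeat (match goal with |- is_true (_ && _) => apply/andP; split end);
  try assumption; try (apply: nzfact); try (apply: nz1n); try (apply: nz2n);
  try (apply: lt0r_neq0; lra).

Lemma Qrec l k : (0 < k)%N ->
  (l.+1)%:R * Q l.+1 k = ((l + l)%:R - k%:R) * Q l k + k%:R * Q l k.-1.
Proof.
case: k => [|k] // _; rewrite succnK.
case: (ltngtP l.+1 k.+1) => hlk.
- rewrite (Qlt l.+1 k.+1) // (Qlt l k.+1); last by lia.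
  rewrite (Qlt l k); last by lia.
  by rewrite !mulr0 addr0.
- have hl : l = (k.+1 + (l - k.+1))%N by lia.
  move: (l - k.+1)%N hl => j ->; clear hlk.
  rewrite -addnS Qform Qform.
  case: k => [|k].
    rewrite /Q mulr0 addr0 !add1n add0n (_ : (2 * j.+1 = (2 * j).+2)%N); last by lia.
    rewrite (factS (2 * j).+1) (factS (2 * j)) (factS j.+1) (factS j) expnS !natrM.
    have := nzfact (2 * j); have := nzfact j; have := ler0n rat j.
    have : ((2 ^ j)%:R : rat) != 0 by rewrite pnatr_eq0 expn_eq0.
    move=> h1 h2 h3 h4.
    field.
    by nzs.
  have -> : Q (k.+2 + j) k.+1 = Q (k.+1 + j.+1) k.+1 by rewrite addSnnS.
  rewrite Qform.
  rewrite (_ : (k.+1 + 2 * j.+1 = (k + 2 * j).+3)%N); last by lia.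
  rewrite (_ : (k.+2 + j.+1 = (k.+1 + j).+2)%N); last by lia.
  rewrite (_ : (k.+1 + 2 * j = (k + 2 * j).+1)%N); last by lia.
  rewrite (_ : (k.+2 + j = (k.+1 + j).+1)%N); last by lia.
  rewrite (_ : (k + 2 * j.+1 = (k + 2 * j).+2)%N); last by lia.
  rewrite (_ : (k.+1 + j.+1 = (k.+1 + j).+1)%N); last by lia.
  rewrite (factS (k + 2 * j).+2) (factS (k + 2 * j).+1) (factS (k + 2 * j)).
  rewrite (factS (k.+1 + j).+1) (factS (k.+1 + j)) (factS j) expnS !natrM.
  have := nzfact (k + 2 * j); have := nzfact j; have := nzfact (k.+1 + j).
  have := ler0n rat j; have := ler0n rat k.
  have : ((2 ^ j)%:R : rat) != 0 by rewrite pnatr_eq0 expn_eq0.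
  move=> h1 h2 h3 h4 h5 h6.
  field.
  by nzs.
- case: hlk => ->; rewrite Qdiag (Qlt k k.+1 (ltnSn _)) mulr0 add0r.
  by rewrite Qdiag !mulr1.
Qed.

Definition Fp (N : nat) : {poly rat} := \poly_(l < N) Q l 1.

Lemma coef_1m2X (p : {poly rat}) i :
  ((1 - 'X *+ 2) * p)`_i = p`_i - (if i is i'.+1 then p`_i' else 0) *+ 2.
Proof.
rewrite mulrBl mul1r coefB mulrnAl coefMn coefXM.
by case: i.
Qed.

Lemma Fp_ode N : vz N.-1 ((1 - 'X *+ 2) * (Fp N)^`() - (1 - Fp N)).
Proof.
move=> i hi; rewrite coefB coef_1m2X coefB coef1 !coef_deriv /Fp !coef_poly.
have hi1 : (i.+1 < N)%N by lia.
rewrite hi1 (ltn_trans (ltnSn i) hi1).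
have := Qrec i 1 (ltnSn 0); rewrite /= => e.
case: i hi hi1 e => [|i] _ hi1 e /=.
  by rewrite Qdiag (Qlt 0 1) // mulr0n mulr1n !subr0 subrr.
rewrite coef_deriv coef_poly (ltn_trans (ltnSn i.+1) hi1).
have h0 : Q i.+1 0 = 0 by rewrite /Q.
move: e; rewrite h0 mulr0 addr0 => e.
rewrite (_ : Q i.+2 1 *+ i.+2 = (i.+2)%:R * Q i.+2 1); last by rewrite mulr_natl.
rewrite e.
ring.
Qed.

Lemma Fp_pow N l k : (l < N)%N -> (Fp N ^+ k)`_l = Q l k.
Proof.
elim: l k => [|l IH] k hl.
  rewrite -horner_coef0 horner_exp horner_coef0 /Fp coef_poly hl (Qlt 0 1) //.
  case: k => [|k]; first by rewrite expr0.
  by rewrite expr0n (Qlt 0 k.+1).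
case: k => [|k].
  by rewrite expr0 coef1 /Q.
have hl' : (l < N.-1)%N by lia.
set G := Fp N ^+ k.+1; set H := Fp N ^+ k.
have e : ((1 - 'X *+ 2) * G^`())`_l = ((1 - Fp N) * H)`_l *+ k.+1.
  rewrite /G deriv_exp mulrnAr coefMn mulrA.
  by rewrite (eqcM _ (Fp_ode N)).
move: e; rewrite coef_1m2X !coef_deriv mulrBl mul1r coefB -exprS -/G.
have hG : G`_l = Q l k.+1 by apply: IH; lia.
have hH : H`_l = Q l k by apply: IH; lia.
have hD : match l with 0%N => 0 | i'.+1 => G^`()`_i' end = G`_l *+ l.
  by case: (l) => [|l']; rewrite ?coef_deriv ?mulr0n.
rewrite hD hG hH => /eqP; rewrite subr_eq => /eqP e.
have := Qrec l k.+1 (ltn0Sn _); rewrite succnK => e2.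
apply: (mulfI (x := (l.+1)%:R)); first by rewrite pnatr_eq0.
rewrite e2 mulr_natl e.
ring.
Qed.

Lemma oddprod j : (\prod_(i < (2 * j) | odd i) (i%:R : rat)) * (2 ^ j)%:R * (j`!)%:R
  = ((2 * j)`!)%:R.
Proof.
elim: j => [|j IH]; first by rewrite big_ord0 !mul1r.
rewrite (_ : (2 * j.+1 = (2 * j).+2)%N); last by lia.
rewrite big_mkcond big_ord_recr big_ord_recr /= -big_mkcond /=.
rewrite (_ : odd (2 * j)%N = false); last by rewrite oddM.
rewrite /= mulr1 expnS (factS j) (factS (2 * j).+1) (factS (2 * j)) !natrM -IH.
ring.
Qed.

Lemma dfj j : dfact ((2 * j)%:Z - 1) * (2 ^ j)%:R * (j`!)%:R = ((2 * j)`!)%:R.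
Proof.
case: j => [|j].
  have -> : ((2 * 0)%:Z - 1 = Negz 0)%R by [].
  by rewrite /dfact /= big_ord0 expr0 divr1 !mulr1.
have -> : ((2 * j.+1)%:Z - 1 = Posz (2 * j).+1)%R by lia.
rewrite /dfact (_ : (2 * j).+2 = 2 * j.+1)%N; last by lia.
exact: oddprod.
Qed.

Lemma nz2X j : ((2 ^ j)%:R : rat) != 0.
Proof. by rewrite pnatr_eq0 expn_eq0. Qed.

Lemma Pnk_Q l k : (k <= l)%N -> Pnk l k = (l`!)%:R * Q l k.
Proof.
case: k => [|k] hkl.
  rewrite /Pnk subn0 /Q.
  case: l {hkl} => [|l].
    have -> : ((2 * 0)%:Z - 1 = Negz 0)%R by [].
    by rewrite /dfact /= big_ord0 expr0 divr1 !mulr1.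
  rewrite bin_small; last by lia.
  by rewrite mulr0 /= mulr0.
have hl : l = (k.+1 + (l - k.+1))%N by lia.
move: (l - k.+1)%N hl => j ->.
rewrite Qform /Pnk addKn (_ : (2 * (k.+1 + j) - k.+1 - 1 = k + 2 * j)%N); last by lia.
have hb := bin_fact (leq_addl k (2 * j)); rewrite addnK in hb.
have hb' : (('C(k + 2 * j, 2 * j))%:R : rat) = ((k + 2 * j)`!)%:R / (((2 * j)`!)%:R * (k`!)%:R).
  rewrite -hb natrM natrM; field.
  by rewrite !nzfact.
have hd : dfact ((2 * j)%:Z - 1) = ((2 * j)`!)%:R / ((2 ^ j)%:R * (j`!)%:R).
  rewrite -dfj; field.
  by rewrite nz2X nzfact.
rewrite hb' hd factS natrM.
have := nzfact (k + 2 * j); have := nzfact (2 * j); have := nzfact k; have := nzfact j.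
have := nzfact (k.+1 + j); have := nz2X j; move=> h1 h2 h3 h4 h5 h6.
field.
by nzs.
Qed.

Lemma sum_cut (F : nat -> rat) a b :
  (forall i, (a <= i)%N -> F i = 0) -> (forall i, (b <= i)%N -> F i = 0) ->
  \sum_(i < a) F i = \sum_(i < b) F i.
Proof.
wlog hab : a b / (a <= b)%N.
  move=> W ha hb; case: (leqP a b) => h; first exact: W.
  by symmetry; apply: W => //; apply: ltnW.
move=> ha _.
rewrite -(big_mkord xpredT) -(big_mkord xpredT) (@big_cat_nat _ _ _ a 0 b _ _ (leq0n a) hab) /=.
have -> : \sum_(a <= i < b) F i = 0.
  by rewrite big_nat_cond big1 // => i /andP[/andP[hi _] _]; apply: ha.
by rewrite addr0.
Qed.

Lemma Gcoef N m : (m < N)%N ->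
  ((Fp N \Po Wp N))`_m * (m`!)%:R =
  \sum_(i < N) Q i 1 * ((-1) ^+ (m + i) * (i`!)%:R * (stirling2 m i)%:R).
Proof.
move=> hm; rewrite coef_comp_poly.
rewrite (sum_cut (fun i => (Fp N)`_i * (Wp N ^+ i)`_m) _ N); first last.
- by move=> i hi; rewrite /Fp coef_poly ltnNge hi mul0r.
- by move=> i hi; rewrite nth_default ?mul0r.
rewrite mulr_suml; apply: eq_bigr => i _.
by rewrite /Fp coef_poly ltn_ord -[LHS]mulrA Wp_pow.
Qed.

Lemma stirling2_n0 m : stirling2 m.+1 0 = 0%N.
Proof. by []. Qed.

Lemma sgn_m1 m : ((-1 : rat) ^ ((m.+1)%:Z - 1)) = (-1) ^+ m.
Proof.
have -> : ((m.+1)%:Z - 1 = m%:Z)%R by lia.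
by rewrite -exprnP.
Qed.

Lemma Gcoef_x N m : (0 < m < N)%N ->
  ((Fp N \Po Wp N))`_m * (m`!)%:R = xseq m.
Proof.
case/andP=> hm0 hmN; rewrite Gcoef // /xseq big_mkord.
rewrite (sum_cut (fun l => (-1) ^ (l%:Z - 1) * (stirling2 m l)%:R * dfact ((2 * l)%:Z - 3)) _ N);
  first last.
- by move=> i hi; rewrite stirling2_gt ?mulr0 ?mul0r //; lia.
- by move=> i hi; rewrite stirling2_gt ?mulr0 ?mul0r //; lia.
rewrite mulr_sumr; apply: eq_bigr => i _.
case: m hm0 hmN => [|m] // _ hmN.
case: (nat_of_ord i) => [|l].
  by rewrite stirling2_n0 !(mulr0, mul0r).
have -> : ((m.+1)%:Z - 1 = m%:Z)%R by lia.
have -> : ((l.+1)%:Z - 1 = l%:Z)%R by lia.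
rewrite -!exprnP.
have -> : ((2 * l.+1)%:Z - 3 = (2 * l)%:Z - 1)%R by lia.
have := Pnk_Q l.+1 1 (ltn0Sn l); rewrite /Pnk subn1 /= mul1r.
rewrite (_ : (2 * l.+1 - 1 - 1 = 2 * l)%N); last by lia.
rewrite binn mulr1 => ->.
rewrite !addSn !addnS !exprS exprD.
ring.
Qed.

Lemma Ycoef x M i : (\sum_(j < M) ycoef x j)`_i =
  if (0 < i <= M)%N then x i / (i`!)%:R else 0.
Proof.
rewrite coef_sum; under eq_bigr => j _ do rewrite /ycoef coefZ coefXn.
case: i => [|i] /=.
  by rewrite big1 // => j _; rewrite mulr0.
case: (ltnP i M) => hi.
  rewrite (bigD1 (Ordinal hi)) //= eqxx mulr1 big1 ?addr0 // => j hj.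
  rewrite eqSS; case: eqP => [e|]; last by rewrite mulr0.
  by move: hj; rewrite -val_eqE /= e eqxx.
rewrite big1 // => j _; rewrite eqSS.
case: eqP => [e|]; last by rewrite mulr0.
by have := ltn_ord j; rewrite -e ltnNge hi.
Qed.

Lemma comp_pow (p q : {poly rat}) k : (p \Po q) ^+ k = (p ^+ k) \Po q.
Proof.
elim: k => [|k IH]; first by rewrite !expr0 -polyC1 comp_polyC.
by rewrite !exprS IH comp_polyM.
Qed.

Lemma G0 N : (0 < N)%N -> (Fp N \Po Wp N)`_0 = 0.
Proof.
move=> hN; have := Gcoef N 0 hN; rewrite fact0 mulr1 => ->.
rewrite big1 // => i _; case: (nat_of_ord i) => [|l].
  by rewrite (Qlt 0 1) // mul0r.
by rewrite stirling2_gt // !mulr0.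
Qed.

Lemma Wcoef N n i : (n < N)%N ->
  (Wp N ^+ i)`_n = (-1) ^+ (n + i) * (i`!)%:R * (stirling2 n i)%:R / (n`!)%:R.
Proof.
move=> hn; rewrite -(Wp_pow N n i hn); field; exact: nzfact.
Qed.

Theorem theorem3p4 (n k : nat) : (k <= n)%N ->
  bellB n k xseq =
  (-1) ^+ n / (k`!)%:R *
  \sum_(k <= l < n.+1) (-1) ^+ l * (stirling2 n l)%:R * Pnk l k.
Proof.
move=> hk; rewrite bell_coef // coefZ.
set Y := \sum_(j < n - k + 1) ycoef xseq j.
set G := Fp n.+1 \Po Wp n.+1.
have hYG : (Y ^+ k)`_n = (G ^+ k)`_n.
  case: k hk @Y => [|k] hk Y; first by rewrite !expr0.
  have vY : vz 1 Y by case=> // _; rewrite /Y Ycoef.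
  have vG : vz 1 G by case=> // _; rewrite /G G0.
  have vYG : vz (n - k.+1 + 1 + 1) (Y - G).
    move=> i hi; rewrite coefB /Y Ycoef.
    case: i hi => [|i] hi; first by rewrite /G G0 // subr0.
    rewrite ifT; last by lia.
    have := Gcoef_x n.+1 i.+1; rewrite -/G => e.
    rewrite -e; last by lia.
    rewrite mulrK ?subrr //; exact: nzfact.
  have := vz_powdiff (n - k.+1 + 1) k.+1 Y G (ltn0Sn k) vY vG vYG.
  rewrite (_ : (n - k.+1 + 1 + k.+1 = n.+1)%N); last by lia.
  move=> h; apply/eqP; rewrite -subr_eq0 -coefB; apply/eqP; exact: h.
rewrite hYG /G comp_pow coef_comp_poly.
rewrite (sum_cut (fun i => (Fp n.+1 ^+ k)`_i * (Wp n.+1 ^+ i)`_n) _ n.+1); first last.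
- by move=> i hi; rewrite Wcoef // stirling2_gt // !(mulr0, mul0r).
- by move=> i hi; rewrite nth_default ?mul0r.
have eR : \sum_(k <= l < n.+1) (-1) ^+ l * (stirling2 n l)%:R * Pnk l k =
          \sum_(i < n.+1) (-1) ^+ i * (stirling2 n i)%:R * ((i`!)%:R * Q i k).
  rewrite -(big_mkord (fun _ => true) (fun i => (-1) ^+ i * (stirling2 n i)%:R * ((i`!)%:R * Q i k))).
  rewrite (@big_cat_nat _ _ _ k 0 n.+1) //; last by lia.
  rewrite [X in _ = X + _]big_nat_cond [X in _ = X + _]big1 ?add0r; last first.
    by move=> i /andP[/andP[_ hi] _]; rewrite Qlt // !mulr0.
  by apply: eq_big_nat => i /andP[hki _]; rewrite Pnk_Q.
rewrite eR !mulr_sumr; apply: eq_bigr => i _.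
rewrite Fp_pow // Wcoef // exprD.
have := nzfact n; have := nzfact k; move=> h1 h2.
field.
by rewrite h1 h2.
Qed.
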